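(* Let $G$ be a finite Weetman graph and let $v_0\in V(G)$. Then the cluster graph $\mathcal{C}(G)$ of $G$ with respect to $v_0$ is a tree.
   Context: All graphs are simple and connected; $d$ is graph distance and $\mathrm{pred}_{v_0}(v)=\{u : uv\in E(G),\ d(v_0,u)=d(v_0,v)-1\}$. $G$ is Weetman if for every vertex $v_0$: (Triangle Condition) for every two adjacent vertices $v,v'$ with $d(v_0,v)=d(v_0,v')=k$, there is $u$ with $d(v_0,u)=k-1$ and $uv,uv'\in E(G)$; (Interval Condition) for every vertex $v$, the subgraph induced by $\mathrm{pred}_{v_0}(v)$ is connected. For $i\ge0$ let $S^i=\{v: d(v_0,v)=i\}$. The clusters with respect to $v_0$ are the vertex sets of the connected components of the induced subgraphs $G[S^i]$, $i\ge 0$. The cluster graph $\mathcal{C}(G)$ has the clusters as vertices, two distinct clusters $C,C'$ being adjacent iff some $v\in C$, $v'\in C'$ satisfy $vv'\in E(G)$. *)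

(* Defs.v *)
From mathcomp Require Import all_boot.
Set Implicit Arguments. Unset Strict Implicit. Unset Printing Implicit Defensive.

Section Graph.
Variables (T : finType) (e : rel T).

Definition simple_graph : Prop := symmetric e /\ irreflexive e.
Definition graph_connected : Prop := forall x y : T, connect e x y.

Definition ball (n : nat) (x : T) : {set T} :=
  iter n (fun S : {set T} => S :|: [set y | [exists z in S, e z y]]) [set x].

(* graph distance (least n with y in ball n x; meaningful for connected graphs) *)
Definition dist (x y : T) : nat := find (fun n => y \in ball n x) (iota 0 #|T|).

Definition predset (v0 v : T) : {set T} :=
  [set u | e u v && (dist v0 u + 1 == dist v0 v)].

Definition induced_connected (S : {set T}) : Prop :=
  forall x y, x \in S -> y \in S ->
    connect (fun a b => [&& e a b, a \in S & b \in S]) x y.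

Definition triangle_condition (v0 : T) : Prop :=
  forall v v' : T, e v v' -> dist v0 v = dist v0 v' ->
    exists u, dist v0 u + 1 = dist v0 v /\ e u v /\ e u v'.

Definition interval_condition (v0 : T) : Prop :=
  forall v : T, induced_connected (predset v0 v).

Definition weetman : Prop :=
  forall v0 : T, triangle_condition v0 /\ interval_condition v0.

(* clusters with respect to v0: components of G[S^i] *)
Definition level_edge (v0 : T) : rel T :=
  fun a b => e a b && (dist v0 a == dist v0 b).
Definition cluster (v0 v : T) : {set T} := [set w | connect (level_edge v0) v w].
Definition clusters (v0 : T) : {set {set T}} := [set cluster v0 v | v in T].

Definition cluster_adj : rel {set T} :=
  fun C C' => (C != C') && [exists v in C, exists v' in C', e v v'].

End Graph.

Definition is_tree (U : finType) (V : {set U}) (r : rel U) : Prop :=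
  (forall x y, x \in V -> y \in V ->
     connect (fun a b => [&& r a b, a \in V & b \in V]) x y) /\
  (forall p : seq U, all (mem V) p -> uniq p -> 3 <= size p -> ~~ cycle r p).

(* Main.v *)
Require Import Defs.
From mathcomp Require Import all_boot.
From mathcomp Require Import zify.
Set Implicit Arguments. Unset Strict Implicit. Unset Printing Implicit Defensive.

Lemma ball_step (T : finType) (e : rel T) n x y z :
  y \in ball e n x -> e y z -> z \in ball e n.+1 x.
Proof.
move=> Hy Hyz; rewrite /ball iterS -/(ball e n x) inE; apply/orP; right.
by rewrite inE; apply/existsP; exists y; rewrite Hy.
Qed.

Lemma ball_path (T : finType) (e : rel T) x p :
  path e x p -> last x p \in ball e (size p) x.
Proof.
elim/last_ind: p => [|p z IH]; first by rewrite /= /ball /= inE.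
rewrite rcons_path => /andP[Hp He]; rewrite last_rcons size_rcons.
exact: ball_step (IH Hp) He.
Qed.

Lemma dist_min (T : finType) (e : rel T) x y m :
  y \in ball e m x -> dist e x y <= m.
Proof.
move=> Hy; rewrite /dist; case: (ltnP m #|T|) => Hm.
  rewrite leqNgt; apply/negP => Hlt.
  have := before_find 0 Hlt; rewrite nth_iota // add0n => H.
  by rewrite /= Hy in H.
by apply: leq_trans (find_size _ _) _; rewrite size_iota.
Qed.

Lemma ball_dist (T : finType) (e : rel T) x y :
  graph_connected e -> y \in ball e (dist e x y) x.
Proof.
move=> Hc; have /connectP[p Hp ->] := Hc x y.
case: (shortenP Hp) => p' Hp' Hu _.
have Hb := ball_path Hp'.
have Hs : size p' < #|T|.
  move/card_uniqP: Hu => /= <-; exact: max_card.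
have Hhas : has (fun n => last x p' \in ball e n x) (iota 0 #|T|).
  by apply/hasP; exists (size p'); rewrite // mem_iota.
have Hd := Hhas; rewrite has_find size_iota in Hd.
have := nth_find 0 Hhas; rewrite nth_iota // add0n.
Qed.

Lemma dist_edge (T : finType) (e : rel T) x a b :
  graph_connected e -> e a b -> dist e x b <= (dist e x a).+1.
Proof.
move=> Hc Hab; apply: dist_min; exact: ball_step (ball_dist x a Hc) Hab.
Qed.

Lemma level_sym (T : finType) (e : rel T) v0 :
  symmetric e -> symmetric (level_edge e v0).
Proof. by move=> Hs a b; rewrite /level_edge Hs eq_sym. Qed.

Lemma connect_level_dist (T : finType) (e : rel T) v0 a b :
  connect (level_edge e v0) a b -> dist e v0 a = dist e v0 b.
Proof.
move=> H; apply/eqP.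
have := @closed_connect _ (level_edge e v0) [pred x | dist e v0 x == dist e v0 b].
move=> /(_ _ a b H); rewrite !inE eqxx => ->; first done.
by move=> x y /andP[_ /eqP Hxy]; rewrite !inE Hxy.
Qed.

Lemma cluster_eq (T : finType) (e : rel T) v0 v w :
  symmetric e -> w \in cluster e v0 v -> cluster e v0 w = cluster e v0 v.
Proof.
move=> Hs; rewrite inE => Hvw; apply/setP => x; rewrite !inE.
by rewrite (same_connect (sym_connect_sym (level_sym v0 Hs)) Hvw).
Qed.

Lemma in_cluster (T : finType) (e : rel T) v0 v : v \in cluster e v0 v.
Proof. by rewrite inE connect0. Qed.

Lemma parent (T : finType) (e : rel T) v0 :
  simple_graph e -> weetman e ->
  forall w w' u u', connect (level_edge e v0) w w' ->
  e u w -> dist e v0 u + 1 = dist e v0 w ->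
  e u' w' -> dist e v0 u' + 1 = dist e v0 w' ->
  connect (level_edge e v0) u u'.
Proof.
move=> [Hs Hirr] Hw.
have Hbase : forall w u u', e u w -> dist e v0 u + 1 = dist e v0 w ->
    e u' w -> dist e v0 u' + 1 = dist e v0 w -> connect (level_edge e v0) u u'.
  move=> w u u' Hu Hdu Hu' Hdu'.
  have [_ Hint] := Hw v0.
  have := Hint w u u'; rewrite !inE Hu Hu' Hdu Hdu' !eqxx => /(_ isT isT) H.
  apply: connect_sub H => a b /and3P[Hab]; rewrite !inE => /andP[_ /eqP Ha] /andP[_ /eqP Hb].
  apply: connect1; rewrite /level_edge Hab /=; apply/eqP.
  by apply/eqP; rewrite -(eqn_add2r 1) Ha Hb.
move=> w w' u u' /connectP[p Hp ->]; elim: p w u Hp => [|z p IH] w u /=.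
  by move=> _; apply: Hbase.
move=> /andP[/andP[Hwz /eqP Hd] Hp] Hu Hdu Hu' Hdu'.
have [Htri _] := Hw v0.
have [t [Hdt [Htw Htz]]] := Htri w z Hwz Hd.
apply: connect_trans (Hbase w u t Hu Hdu Htw Hdt) _.
apply: IH Hp Htz _ Hu' Hdu'; by rewrite Hdt.
Qed.

Lemma adj_level (T : finType) (e : rel T) v0 v v' :
  simple_graph e -> graph_connected e -> e v v' ->
  cluster e v0 v != cluster e v0 v' ->
  dist e v0 v + 1 = dist e v0 v' \/ dist e v0 v' + 1 = dist e v0 v.
Proof.
move=> [Hs _] Hc Hvv' Hne.
have H1 := dist_edge v0 Hc Hvv'.
have H2 : dist e v0 v <= (dist e v0 v').+1.
  by apply: dist_edge Hc _; rewrite Hs.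
case: (eqVneq (dist e v0 v) (dist e v0 v')) => Heq.
  have Hin : v' \in cluster e v0 v.
    by rewrite inE; apply: connect1; rewrite /level_edge Hvv' Heq eqxx.
  by rewrite (cluster_eq Hs Hin) eqxx in Hne.
move: Heq => /eqP Heq; rewrite !addn1; lia.
Qed.

Definition lvl (T : finType) (e : rel T) v0 (C : {set T}) := \max_(v in C) dist e v0 v.

Lemma lvl_eq (T : finType) (e : rel T) v0 a v :
  v \in cluster e v0 a -> lvl e v0 (cluster e v0 a) = dist e v0 v.
Proof.
move=> Hv; apply/eqP; rewrite eqn_leq; apply/andP; split.
  apply/bigmax_leqP => w Hw; move: Hv Hw; rewrite !inE => /connect_level_dist <-.
  by move/connect_level_dist => <-.
exact: leq_bigmax_cond.
Qed.

Lemma clusters_conn (T : finType) (e : rel T) v0 x y :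
  simple_graph e -> connect e x y ->
  connect (fun a b => [&& cluster_adj e a b, a \in clusters e v0 & b \in clusters e v0])
    (cluster e v0 x) (cluster e v0 y).
Proof.
move=> [Hs _] /connectP[p Hp ->]; elim: p x Hp => [|z p IH] x /=; first by rewrite connect0.
move=> /andP[Hxz Hp]; apply: connect_trans (IH _ Hp).
case: (eqVneq (cluster e v0 x) (cluster e v0 z)) => [->|Hne]; first exact: connect0.
apply: connect1; rewrite /cluster_adj Hne !imset_f //=.
rewrite andbT; apply/existsP; exists x; rewrite in_cluster /=; apply/existsP; exists z.
by rewrite in_cluster.
Qed.

Lemma below (T : finType) (e : rel T) v0 a b v v' :
  simple_graph e -> graph_connected e ->
  v \in cluster e v0 a -> v' \in cluster e v0 b -> e v v' ->
  cluster e v0 a != cluster e v0 b ->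
  lvl e v0 (cluster e v0 b) <= lvl e v0 (cluster e v0 a) ->
  dist e v0 v' + 1 = dist e v0 v.
Proof.
move=> Hsg Hc Hv Hv' Hvv' Hne Hle.
rewrite (lvl_eq Hv) (lvl_eq Hv') in Hle.
have [Hs _] := Hsg.
rewrite -(cluster_eq Hs Hv) -(cluster_eq Hs Hv') in Hne.
case: (adj_level Hsg Hc Hvv' Hne) => // H; lia.
Qed.

Theorem mainTheorem4 (T : finType) (e : rel T)
  (Hsimple : simple_graph e) (Hconn : graph_connected e) (Hw : weetman e)
  (v0 : T) :
  is_tree (clusters e v0) (cluster_adj e).
Proof.
have [Hs Hirr] := Hsimple.
split.
  by move=> x y /imsetP[a _ ->] /imsetP[b _ ->]; apply: clusters_conn (Hconn a b).
move=> p Hall Hu Hsz; apply/negP => Hcyc.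
case: p Hall Hu Hsz Hcyc => [|C0 p0] //; set p := C0 :: p0 => Hall Hu Hsz Hcyc.
case: (@arg_maxnP _ C0 (fun C => C \in p) (lvl e v0) (mem_head _ _)) => C HCp Hmax.
case: (rot_to HCp) => i s Hrot.
have Hc' : cycle (cluster_adj e) (C :: s) by rewrite -Hrot rot_cycle.
have Hu' : uniq (C :: s) by rewrite -Hrot rot_uniq.
have Hsz' : 3 <= size (C :: s) by rewrite -Hrot size_rot.
have Hmem : forall D, D \in C :: s -> D \in p by move=> D; rewrite -Hrot mem_rot.
have Hcl : forall D, D \in p -> D \in clusters e v0 by move=> D; apply: (allP Hall).
clear Hrot.
case: s Hc' Hu' Hsz' Hmem => [|D1 s] //; case/lastP: s => [|t D2] //.
move=> Hc' Hu' _ Hmem.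
move: Hc'; rewrite /= rcons_path last_rcons => /andP[HCD1 /andP[_ HD2C]].
have HD12 : D1 != D2.
  move: Hu' => /= /and3P[_ HD1 _]; apply/eqP => E; move: HD1; rewrite E.
  by rewrite mem_rcons mem_head.
have HD1p : D1 \in p by apply: Hmem; rewrite !inE eqxx orbT.
have HD2p : D2 \in p by apply: Hmem; rewrite !inE mem_rcons mem_head !orbT.
have /imsetP[a _ Ea] := Hcl _ HCp.
have /imsetP[b1 _ Eb1] := Hcl _ HD1p.
have /imsetP[b2 _ Eb2] := Hcl _ HD2p.
move: HCD1 HD2C; rewrite /cluster_adj => /andP[Hne1 /existsP[v /andP[Hv /existsP[v1 /andP[Hv1 Hvv1]]]]].
move=> /andP[Hne2 /existsP[v2 /andP[Hv2 /existsP[w /andP[Hw' Hv2w]]]]].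
have Hl1 := Hmax _ HD1p; have Hl2 := Hmax _ HD2p.
rewrite Ea Eb1 Eb2 in Hv Hv1 Hv2 Hw' Hne1 Hne2 Hl1 Hl2.
have Hd1 := below Hsimple Hconn Hv Hv1 Hvv1 Hne1 Hl1.
have Hd2 : dist e v0 v2 + 1 = dist e v0 w.
  apply: (below Hsimple Hconn Hw' Hv2); first by rewrite Hs.
    by rewrite eq_sym.
  exact: Hl2.
have Hvw : connect (level_edge e v0) v w.
  move: Hv Hw'; rewrite !inE => Hav Haw.
  apply: connect_trans _ Haw; rewrite (sym_connect_sym (level_sym v0 Hs)) //.
have Hv1v : e v1 v by rewrite Hs.
have Hp := parent Hsimple Hw Hvw Hv1v Hd1 Hv2w Hd2.
have Hin : v2 \in cluster e v0 v1 by rewrite inE.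
move: HD12; rewrite Eb1 Eb2 -(cluster_eq Hs Hv1) -(cluster_eq Hs Hv2) (cluster_eq Hs Hin).
by rewrite eqxx.
Qed.
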